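(* Suppose the sensor messages are binary ($l=2$) and the densities $f_0,\dots,f_{M-1}$ are linearly independent. Then $Q_\alpha=Q_U$, i.e., the set of extreme points of $\bar Q$ coincides with the set of distribution vectors of ULQs.
   Context: A raw observation $X$ has density $f_m$ under state $m\in\{0,\dots,M-1\}$ (probability $\mathbf P_m$) with respect to a common $\sigma$-finite measure. Deterministic quantizers are measurable maps $\phi$ to $\{0,1\}$ (set $\Phi$); a randomized quantizer $\bar\phi=\sum_jp^j\phi^j$ is a probability distribution on a countable subset of $\Phi$; $\bar\Phi$ is the set of all quantizers. The distribution vector of $\bar\phi\in\bar\Phi$ is $q(\bar\phi)=(\mathbf P_m(\bar\phi(X)=i))_{0\le i\le l-1,\,0\le m\le M-1}\in\mathbb R^{Ml}$ (for randomized $\bar\phi$, $\mathbf P_m(\bar\phi(X)=i)=\sum_jp^j\mathbf P_m(\phi^j(X)=i)$). Let $Q=\{q(\phi):\phi\in\Phi\}$, $\bar Q=\{q(\bar\phi):\bar\phi\in\bar\Phi\}$ (which is the compact convex hull of the compact set $Q$), $Q_U=\{q(\phi):\phi\text{ a ULQ}\}$, and $Q_\alpha$ the set of extreme points of $\bar Q$. A deterministic quantizer $\phi$ is a ULQ if $\phi(X)=\mathbf 1\{\sum_ma_mf_m(X)>0\}$ for reals $a_0,\dots,a_{M-1}$ with $\mathbf P_{m'}\{\sum_ma_mf_m(X)=0\}=0$ for all $m'$. The densities are linearly independent if $\mathbf P_{m'}\{\sum_ma_mf_m(X)=0\}=0$ for every $m'$ and every $(a_m)$ not all zero. *)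

(* Defs.v *)
From HB Require Import structures.
From mathcomp Require Import all_boot all_order all_algebra.
From mathcomp Require Import all_classical all_reals all_analysis.
Set Implicit Arguments. Unset Strict Implicit. Unset Printing Implicit Defensive.
Import Order.TTheory GRing.Theory Num.Theory.
Import numFieldNormedType.Exports.
Local Open Scope classical_set_scope.
Local Open Scope ring_scope.

Section Quantizers.
Context {d : measure_display} {T : measurableType d} {R : realType}.
Variable (mu : {measure set T -> \bar R}) (M : nat) (f : 'I_M -> T -> R).

Definition Pm (m : 'I_M) (A : set T) : \bar R :=
  (\int[mu]_(x in A) (f m x)%:E)%E.

(* deterministic quantizer: measurable map X -> {0,1} (false = 0, true = 1) *)
Definition det_quantizer (phi : T -> bool) : Prop :=
  measurable (phi @^-1` [set true]).

Definition qdet (phi : T -> bool) : 'M[R]_(2, M) :=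
  \matrix_(i < 2, m < M) fine (Pm m [set x | nat_of_bool (phi x) = val i]).

Definition rand_quantizer (p : nat -> R) (phis : nat -> T -> bool) : Prop :=
  (forall j, 0 <= p j) /\ (forall j, det_quantizer (phis j)) /\
  (series p @ \oo --> (1 : R)).

Definition qrand (p : nat -> R) (phis : nat -> T -> bool) : 'M[R]_(2, M) :=
  \matrix_(i < 2, m < M) (\big[+%R/0%R]_(0 <= j <oo) (p j * qdet (phis j) i m)).

Definition Qbar : set 'M[R]_(2, M) :=
  [set q | exists p phis, rand_quantizer p phis /\ q = qrand p phis].

Definition lincomb (a : 'I_M -> R) (x : T) : R := \sum_(m < M) a m * f m x.

Definition ULQ (phi : T -> bool) : Prop :=
  det_quantizer phi /\
  exists a : 'I_M -> R,
    (forall x, phi x = (0 < lincomb a x)) /\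
    (forall m', Pm m' [set x | lincomb a x = 0] = 0%E).

Definition QU : set 'M[R]_(2, M) := [set qdet phi | phi in ULQ].

Definition densities_lin_indep : Prop :=
  forall a : 'I_M -> R, (exists m, a m != 0) ->
    forall m', Pm m' [set x | lincomb a x = 0] = 0%E.

End Quantizers.

Definition extreme_points {R : realType} {V : lmodType R} (S : set V) : set V :=
  [set x | S x /\ forall y z (t : R), S y -> S z -> 0 < t < 1 ->
            x = t *: y + (1 - t) *: z -> y = x /\ z = x].

(* Main.v *)
Require Import Defs.
From HB Require Import structures.
From mathcomp Require Import all_boot all_order all_algebra.
From mathcomp Require Import all_classical all_reals all_analysis.
From mathcomp Require Import measurable_realfun ring lra.
Set Implicit Arguments. Unset Strict Implicit. Unset Printing Implicit Defensive.
Import Order.TTheory GRing.Theory Num.Theory.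
Import numFieldNormedType.Exports.
Local Open Scope classical_set_scope.
Local Open Scope ring_scope.

Section Sep.
Context (R : realType).
Implicit Types (x y u v w a : nat -> R).

Definition dotn n a x : R := \sum_(i < n) a i * x i.
Definition supp n x := forall i, (n <= i)%N -> x i = 0.
Definition vadd x y : nat -> R := fun i => x i + y i.
Definition vsc (l : R) x : nat -> R := fun i => l * x i.
Definition ev n : nat -> R := fun i => if i == n then 1 else 0.
Definition vz : nat -> R := fun _ => 0.

Lemma dotn_add n a x y : dotn n a (vadd x y) = dotn n a x + dotn n a y.
Proof. by rewrite /dotn -big_split /=; apply: eq_bigr => i _; rewrite /vadd mulrDr. Qed.

Lemma dotn_sc n a l x : dotn n a (vsc l x) = l * dotn n a x.
Proof. by rewrite /dotn mulr_sumr; apply: eq_bigr => i _; rewrite /vsc mulrCA. Qed.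

Lemma dotn_ext n a b x y : (forall i, (i < n)%N -> a i * x i = b i * y i) ->
  dotn n a x = dotn n b y.
Proof. by move=> H; apply: eq_bigr => i _; apply: H. Qed.

Lemma dotnS n a x : dotn n.+1 a x = dotn n a x + a n * x n.
Proof. by rewrite /dotn big_ord_recr. Qed.

Lemma supp_add n x y : supp n x -> supp n y -> supp n (vadd x y).
Proof. by move=> hx hy i hi; rewrite /vadd hx ?hy ?addr0. Qed.

Lemma supp_sc n l x : supp n x -> supp n (vsc l x).
Proof. by move=> hx i hi; rewrite /vsc hx ?mulr0. Qed.

Lemma supp_ev n : supp n.+1 (ev n).
Proof. by move=> i hi; rewrite /ev; case: eqP => // e; subst; rewrite ltnn in hi. Qed.

Lemma suppS n x : supp n x -> supp n.+1 x.
Proof. by move=> h i hi; apply: h; exact: ltnW. Qed.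

Theorem HB n (g : (nat -> R) -> R) :
  (forall x y, g (vadd x y) <= g x + g y) ->
  (forall l x, 0 < l -> g (vsc l x) = l * g x) ->
  0 <= g vz ->
  exists a, forall x, supp n x -> dotn n a x <= g x.
Proof.
move=> gadd gsc g0; elim: n => [|n [a IH]].
  exists vz => x sx; rewrite /dotn big_ord0.
  have -> : x = vz by apply/funext => i; rewrite sx.
  exact: g0.
pose S := [set r | exists v, supp n v /\ r = dotn n a v - g (vadd v (vsc (-1) (ev n)))].
have ubS : forall w, supp n w -> ubound S (g (vadd w (ev n)) - dotn n a w).
  move=> w sw r [v [sv ->]].
  have h1 : dotn n a v + dotn n a w <= g (vadd v w).
    by rewrite -dotn_add; apply: IH; exact: supp_add.
  have h2 : vadd v w = vadd (vadd v (vsc (-1) (ev n))) (vadd w (ev n)).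
    by apply/funext => i; rewrite /vadd /vsc; ring.
  have h3 := gadd (vadd v (vsc (-1) (ev n))) (vadd w (ev n)).
  rewrite h2 in h1.
  lra.
have S0 : S !=set0.
  exists (dotn n a vz - g (vadd vz (vsc (-1) (ev n)))); exists vz; split => //.
have hS : has_ubound S.
  exists (g (vadd vz (ev n)) - dotn n a vz); apply: ubS; by move=> i.
pose c := sup S.
exists (fun i => if i == n then c else a i) => x sx.
rewrite dotnS eqxx.
pose u := fun i => if (i < n)%N then x i else 0.
have su : supp n u by move=> i hi; rewrite /u ltnNge hi.
have ex : x = vadd u (vsc (x n) (ev n)).
  apply/funext => i; rewrite /vadd /vsc /u /ev.
  case: ltnP => hi.
    by rewrite (ltn_eqF hi) mulr0 addr0.
  case: eqP => [->|ne]; first by rewrite mulr1 add0r.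
  by rewrite sx ?mulr0 ?addr0 // ltn_neqAle eq_sym; apply/andP; split => //; apply/eqP.
have du : dotn n (fun i => if i == n then c else a i) x = dotn n a u.
  apply: dotn_ext => i hi; rewrite /u hi (ltn_eqF hi) //.
rewrite du.
have [t0|tneg|tpos] := ltgtP (x n) 0.
-
  pose s := - x n.
  have s0 : 0 < s by rewrite /s oppr_gt0.
  pose v := vsc s^-1 u.
  have sv : supp n v by exact: supp_sc.
  have hc : dotn n a v - g (vadd v (vsc (-1) (ev n))) <= c.
    by apply: ub_le_sup => //; exists v; split.
  have e1 : vadd u (vsc (x n) (ev n)) = vsc s (vadd v (vsc (-1) (ev n))).
    apply/funext => i; rewrite /v /vadd /vsc mulrDr mulrA mulfV ?mul1r; last by rewrite gt_eqF.
    rewrite /s; ring.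
  have e2 : dotn n a u = s * dotn n a v.
    rewrite /v dotn_sc mulrA mulfV ?mul1r //; lra.
  rewrite {2}ex e1 gsc // e2.
  have : s * (dotn n a v - g (vadd v (vsc (-1) (ev n)))) <= s * c by rewrite ler_pM2l.
  rewrite /s; lra.
-
  pose v := vsc (x n)^-1 u.
  have sv : supp n v by exact: supp_sc.
  have hc : c <= g (vadd v (ev n)) - dotn n a v.
    by apply: ge_sup => //; apply: ubS.
  have e1 : vadd u (vsc (x n) (ev n)) = vsc (x n) (vadd v (ev n)).
    apply/funext => i; rewrite /v /vadd /vsc mulrDr mulrA mulfV ?mul1r ?mulr1 //; lra.
  have e2 : dotn n a u = x n * dotn n a v.
    rewrite /v dotn_sc mulrA mulfV ?mul1r //; lra.
  rewrite {2}ex e1 gsc // e2.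
  have : x n * c <= x n * (g (vadd v (ev n)) - dotn n a v) by rewrite ler_pM2l.
  lra.
- rewrite tpos mulr0 addr0.
  have -> : x = u by rewrite {1}ex tpos; apply/funext => i; rewrite /vadd /vsc mul0r addr0.
  exact: IH.
Qed.


Definition trunc n x : nat -> R := fun i => if (i < n)%N then x i else 0.

Lemma supp_trunc n x : supp n (trunc n x).
Proof. by move=> i hi; rewrite /trunc ltnNge hi. Qed.

Lemma trunc_add n x y : trunc n (vadd x y) = vadd (trunc n x) (trunc n y).
Proof. by apply/funext => i; rewrite /trunc /vadd; case: ifP; rewrite ?addr0. Qed.

Lemma trunc_sc n l x : trunc n (vsc l x) = vsc l (trunc n x).
Proof. by apply/funext => i; rewrite /trunc /vsc; case: ifP; rewrite ?mulr0. Qed.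

Lemma trunc_vz n : trunc n vz = vz.
Proof. by apply/funext => i; rewrite /trunc /vz; case: ifP. Qed.

Lemma trunc_id n x : trunc n (trunc n x) = trunc n x.
Proof. by apply/funext => i; rewrite /trunc; case: ifP => // ->. Qed.

Lemma trunc_supp n x : supp n x -> trunc n x = x.
Proof. by move=> h; apply/funext => i; rewrite /trunc; case: ltnP => // hi; rewrite h. Qed.

Lemma dotn_trunc n a x : dotn n a (trunc n x) = dotn n a x.
Proof. by apply: dotn_ext => i hi; rewrite /trunc hi. Qed.

Lemma decomp n w : supp n.+1 w -> w = vadd (trunc n w) (vsc (w n) (ev n)).
Proof.
move=> sw; apply/funext => i; rewrite /vadd /vsc /trunc /ev.
case: ltnP => hi.
  by rewrite (ltn_eqF hi) mulr0 addr0.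
case: eqP => [->|ne]; first by rewrite mulr1 add0r.
by rewrite sw ?mulr0 ?addr0 // ltn_neqAle eq_sym; apply/andP; split => //; apply/eqP.
Qed.

Definition cone n (K : set (nat -> R)) :=
  [/\ (forall w, K w -> supp n w), K vz,
      (forall x y, K x -> K y -> K (vadd x y)) &
      (forall l x, 0 < l -> K x -> K (vsc l x))].

Lemma B1 n K : cone n.+1 K ->
  (forall y, supp n y -> exists w, K w /\ trunc n w = y) ->
  (forall t, K (vsc t (ev n)) -> 0 <= t) ->
  exists a, a n = -1 /\ forall w, K w -> dotn n.+1 a w <= 0.
Proof.
move=> [Ks K0 Kadd Ksc] Kcov Kpos.
pose F u := [set t | K (vadd u (vsc t (ev n)))].
have Fne : forall u, supp n u -> F u !=set0.
  move=> u su; have [w [Kw tw]] := Kcov u su.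
  exists (w n); rewrite /F /= -tw -decomp //; exact: Ks.
have Flb : forall u, supp n u -> has_lbound (F u).
  move=> u su; have [t' Ht'] := Fne (vsc (-1) u) (supp_sc (-1) su).
  exists (- t') => t Ht.
  have := Kadd _ _ Ht Ht'.
  have -> : vadd (vadd u (vsc t (ev n))) (vadd (vsc (-1) u) (vsc t' (ev n)))
     = vsc (t + t') (ev n).
    by apply/funext => i; rewrite /vadd /vsc; ring.
  move/Kpos; lra.
have Fmem : forall u t, supp n u -> F u t -> inf (F u) <= t.
  by move=> u t su Ht; apply: ge_inf => //; exact: Flb.
have Fle : forall u c, supp n u -> (forall t, F u t -> c <= t) -> c <= inf (F u).
  by move=> u c su H; apply: lb_le_inf => //; exact: Fne.
pose g x := inf (F (trunc n x)).
have gadd : forall x y, g (vadd x y) <= g x + g y.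
  move=> x y; rewrite /g trunc_add.
  set u1 := trunc n x; set u2 := trunc n y.
  have s1 : supp n u1 by exact: supp_trunc.
  have s2 : supp n u2 by exact: supp_trunc.
  have s12 : supp n (vadd u1 u2) by exact: supp_add.
  have H : forall t s, F u1 t -> F u2 s -> inf (F (vadd u1 u2)) <= t + s.
    move=> t s Ht Hs; apply: Fmem => //; rewrite /F /=.
    have -> : vadd (vadd u1 u2) (vsc (t + s) (ev n))
      = vadd (vadd u1 (vsc t (ev n))) (vadd u2 (vsc s (ev n))).
      by apply/funext => i; rewrite /vadd /vsc; ring.
    exact: Kadd.
  have H2 : forall t, F u1 t -> inf (F (vadd u1 u2)) - t <= inf (F u2).
    move=> t Ht; apply: Fle => // s Hs; have := H t s Ht Hs; lra.
  have H3 : inf (F (vadd u1 u2)) - inf (F u2) <= inf (F u1).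
    apply: Fle => // t Ht; have := H2 t Ht; lra.
  lra.
have gsc : forall l x, 0 < l -> g (vsc l x) = l * g x.
  move=> l x l0; rewrite /g trunc_sc.
  set u := trunc n x.
  have su : supp n u by exact: supp_trunc.
  have slu : supp n (vsc l u) by exact: supp_sc.
  apply/eqP; rewrite eq_le; apply/andP; split.
    rewrite -ler_pdivrMl //; apply: Fle => // t Ht.
    rewrite ler_pdivrMl //; apply: Fmem => //; rewrite /F /=.
    have -> : vadd (vsc l u) (vsc (l * t) (ev n)) = vsc l (vadd u (vsc t (ev n))).
      by apply/funext => i; rewrite /vadd /vsc; ring.
    exact: Ksc.
  apply: Fle => // t Ht; rewrite -ler_pdivlMl //.
  apply: Fmem => //; rewrite /F /=.
  have -> : vadd u (vsc (l^-1 * t) (ev n)) = vsc l^-1 (vadd (vsc l u) (vsc t (ev n))).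
    apply/funext => i; rewrite /vadd /vsc mulrDr mulrA mulVf ?mul1r ?mulrA //.
    by rewrite gt_eqF.
  by apply: Ksc => //; rewrite invr_gt0.
have g0 : 0 <= g vz.
  rewrite /g trunc_vz; apply: Fle; first by move=> i.
  move=> t; rewrite /F /=.
  have -> : vadd vz (vsc t (ev n)) = vsc t (ev n).
    by apply/funext => i; rewrite /vadd /vz add0r.
  exact: Kpos.
have [a0 Ha0] := HB n gadd gsc g0.
exists (fun i => if i == n then -1 else a0 i); split; first by rewrite eqxx.
move=> w Kw; rewrite dotnS eqxx.
have -> : dotn n (fun i => if i == n then -1 else a0 i) w = dotn n a0 (trunc n w).
  by rewrite dotn_trunc; apply: dotn_ext => i hi; rewrite (ltn_eqF hi).
have h1 : dotn n a0 (trunc n w) <= g (trunc n w) by apply: Ha0; exact: supp_trunc.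
have h2 : g (trunc n w) <= w n.
  rewrite /g trunc_id; apply: Fmem; first exact: supp_trunc.
  by rewrite /F /= -decomp //; exact: Ks.
lra.
Qed.


Definition refl n x : nat -> R := fun i => if i == n then - x i else x i.

Lemma refl_refl n x : refl n (refl n x) = x.
Proof. by apply/funext => i; rewrite /refl; case: eqP => //; rewrite opprK. Qed.

Theorem Sep n K : cone n K -> (exists y, supp n y /\ ~ K y) ->
  exists a, (exists i, (i < n)%N /\ a i != 0) /\ forall w, K w -> dotn n a w <= 0.
Proof.
elim: n K => [|n IH] K [Ks K0 Kadd Ksc] [y [sy nKy]].
  exfalso; apply: nKy; have -> : y = vz by apply/funext => i; rewrite sy.
  exact: K0.
have [[z [sz nz]]|cov] := pselect (exists z, supp n z /\ ~ exists w, K w /\ trunc n w = z).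
  pose K' := fun z => exists w, K w /\ trunc n w = z.
  have cK' : cone n K'.
    split.
    - by move=> _ [w [_ <-]]; exact: supp_trunc.
    - by exists vz; split => //; exact: trunc_vz.
    - by move=> _ _ [w1 [K1 <-]] [w2 [K2 <-]]; exists (vadd w1 w2); split;
        [exact: Kadd | exact: trunc_add].
    - by move=> l _ l0 [w [Kw <-]]; exists (vsc l w); split;
        [exact: Ksc | exact: trunc_sc].
  have [a [[i [hi ai]] Ha]] := IH K' cK' (ex_intro _ z (conj sz nz)).
  exists (fun i => if (i < n)%N then a i else 0); split.
    by exists i; rewrite hi; split => //; exact: ltnW.
  move=> w Kw; rewrite dotnS ltnn mul0r addr0.
  have -> : dotn n (fun i => if (i < n)%N then a i else 0) w = dotn n a (trunc n w).
    by rewrite dotn_trunc; apply: dotn_ext => j hj; rewrite hj.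
  by apply: Ha; exists w.
have cov' : forall z, supp n z -> exists w, K w /\ trunc n w = z.
  by move=> z sz; apply: contrapT => H; apply: cov; exists z.
have [pos|] := pselect (forall t, K (vsc t (ev n)) -> 0 <= t).
  have [a [an Ha]] := B1 (And4 Ks K0 Kadd Ksc) cov' pos.
  exists a; split => //; exists n; split => //; rewrite an oppr_eq0 oner_eq0.
  done.
move=> /existsNP [t0 /not_implyP [Kt0 t0n]].
have t0neg : t0 < 0 by rewrite ltNge; apply/negP.
have neg : forall t, K (vsc t (ev n)) -> t <= 0.
  move=> t Kt; rewrite leNgt; apply/negP => tpos; apply: nKy.
  have [w [Kw tw]] := cov' (trunc n y) (@supp_trunc n y).
  pose dd := y n - w n.
  have Kd : K (vsc dd (ev n)).
    have [dp|dn|d0] := ltgtP dd 0.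
    + have -> : vsc dd (ev n) = vsc (dd / t0) (vsc t0 (ev n)).
        apply/funext => i; rewrite /vsc mulrA divfK //; lra.
      apply: Ksc => //.
      have -> : dd / t0 = (- dd) / (- t0) by rewrite invrN mulrNN.
      by apply: divr_gt0; rewrite oppr_gt0.
    + have -> : vsc dd (ev n) = vsc (dd / t) (vsc t (ev n)).
        apply/funext => i; rewrite /vsc mulrA divfK //; lra.
      by apply: Ksc => //; exact: divr_gt0.
    + have -> : vsc dd (ev n) = vz by apply/funext => i; rewrite /vsc d0 mul0r.
      exact: K0.
  have -> : y = vadd w (vsc dd (ev n)).
    rewrite {1}(decomp sy) {1}(decomp (Ks _ Kw)) -tw.
    apply/funext => i; rewrite /vadd /vsc /dd; ring.
  exact: Kadd.
pose K' := fun z => K (refl n z).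
have cK' : cone n.+1 K'.
  split.
  - move=> w Kw i hi; have := Ks _ Kw i hi; rewrite /refl.
    by case: eqP => [e|] //; rewrite e ltnn in hi.
  - by rewrite /K'; have -> : refl n vz = vz by apply/funext => i; rewrite /refl /vz oppr0; case: eqP.
  - move=> x1 x2 K1 K2; rewrite /K'.
    have -> : refl n (vadd x1 x2) = vadd (refl n x1) (refl n x2).
      by apply/funext => i; rewrite /refl /vadd; case: eqP => // _; rewrite opprD.
    exact: Kadd.
  - move=> l x l0 Kx; rewrite /K'.
    have -> : refl n (vsc l x) = vsc l (refl n x).
      by apply/funext => i; rewrite /refl /vsc; case: eqP => // _; rewrite mulrN.
    exact: Ksc.
have cov2 : forall z, supp n z -> exists w, K' w /\ trunc n w = z.
  move=> z sz; have [w [Kw <-]] := cov' z sz.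
  exists (refl n w); split; first by rewrite /K' refl_refl.
  apply/funext => i; rewrite /trunc /refl; case: ltnP => // hi.
  by rewrite (ltn_eqF hi).
have pos2 : forall t, K' (vsc t (ev n)) -> 0 <= t.
  move=> t; rewrite /K'.
  have -> : refl n (vsc t (ev n)) = vsc (- t) (ev n).
    apply/funext => i; rewrite /refl /vsc /ev; case: eqP => _; ring.
  move/neg; lra.
have [a [an Ha]] := B1 cK' cov2 pos2.
exists (refl n a); split.
  by exists n; split => //; rewrite /refl eqxx an opprK oner_eq0.
move=> w Kw.
have -> : dotn n.+1 (refl n a) w = dotn n.+1 a (refl n w).
  apply: dotn_ext => i _; rewrite /refl; case: eqP => _ //; ring.
by apply: Ha; rewrite /K' refl_refl.
Qed.

End Sep.

Section Ser.
Context (R : realType).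
Implicit Types (p b v : nat -> R).

Lemma ser_nd v : (forall j, 0 <= v j) -> {homo series v : n m / (n <= m)%N >-> n <= m}.
Proof. by move=> h n m nm; rewrite seriesEnat /=; apply: nondecreasing_series. Qed.

Lemma ser_le v (l : R) : (forall j, 0 <= v j) -> series v n @[n --> \oo] --> l -> forall n, series v n <= l.
Proof.
move=> h hc n.
have c : cvgn (series v) by apply/cvg_ex; exists l.
rewrite -(cvg_lim _ hc) //.
exact: nondecreasing_cvgn_le (ser_nd h) c n.
Qed.

Lemma ser_ge0 v (l : R) : (forall j, 0 <= v j) -> series v n @[n --> \oo] --> l -> 0 <= l.
Proof.
move=> h hc; apply: le_trans (ser_le h hc 0).
by rewrite seriesEnat /= big_geq.
Qed.

Lemma ser_terms0 v : (forall j, 0 <= v j) -> series v n @[n --> \oo] --> (0:R) -> forall j, v j = 0.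
Proof.
move=> h hc j; apply/eqP; rewrite eq_le h andbT.
have := ser_le h hc j.+1; rewrite seriesEnat /= big_nat_recr //=.
have : 0 <= \sum_(0 <= k < j) v k by apply: sumr_ge0 => k _.
lra.
Qed.

Lemma ser_cvg p b : (forall j, 0 <= p j) -> series p @ \oo --> (1:R) ->
  (forall j, 0 <= b j <= 1) -> cvgn (series (fun j => p j * b j)).
Proof.
move=> p0 p1 b01.
have h0 : forall j, 0 <= p j * b j.
  by move=> j; apply: mulr_ge0 => //; case/andP: (b01 j).
apply: nondecreasing_is_cvgn; first exact: ser_nd.
exists 1 => _ [n _ <-].
apply: le_trans (ser_le p0 p1 n).
rewrite !seriesEnat /=; apply: ler_sum => j _.
have /andP[b0 b1] := b01 j.
by rewrite -[X in _ <= X]mulr1 ler_wpM2l.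
Qed.

Lemma cvg_lin (I : Type) (s : seq I) (c : I -> R) (u : I -> nat -> R) (L : I -> R) :
  (forall i, u i @ \oo --> L i) ->
  (fun n => \sum_(i <- s) c i * u i n) @ \oo --> \sum_(i <- s) c i * L i.
Proof.
move=> h; elim: s => [|i s IH].
  rewrite big_nil; under eq_fun do rewrite big_nil; exact: cvg_cst.
rewrite big_cons; under eq_fun do rewrite big_cons.
apply: cvgD => //; exact: cvgMl_tmp.
Qed.


Lemma ser_shift (u : nat -> R) (l : R) :
  (fun n => u 0%N + series (fun j => u j.+1) n) @ \oo --> l -> series u @ \oo --> l.
Proof.
move=> h; rewrite -cvg_shiftS.
suff -> : [sequence series u n.+1]_n = (fun n => u 0%N + series (fun j => u j.+1) n) by [].
by apply/funext => n; rewrite /= !seriesEnat /= big_nat_recl.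
Qed.

End Ser.

Section Meas.
Context (d : measure_display) (T : measurableType d) (R : realType)
  (mu : {measure set T -> \bar R}) (M : nat) (f : 'I_M -> T -> R).
Context (mf : forall m, measurable_fun setT (f m))
  (f0 : forall m x, 0 <= f m x)
  (f1 : forall m, (\int[mu]_x (f m x)%:E)%E = 1%E).

Implicit Types (psi : T -> bool) (p : nat -> R) (phis : nat -> T -> bool) (q : 'M[R]_(2, M)).

Lemma intf m A : measurable A -> mu.-integrable A (EFin \o f m).
Proof.
move=> mA; apply: (integrableS measurableT) => //.
apply/integrableP; split; first exact/measurable_EFinP.
under eq_integral do rewrite /= ger0_norm ?f0 //.
by rewrite f1 ltry.
Qed.

Lemma Rsplit A B (g : T -> R) : measurable A -> measurable B ->
  mu.-integrable A (EFin \o g) ->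
  Rintegral mu A g = Rintegral mu (A `&` B) g + Rintegral mu (A `\` B) g.
Proof.
move=> mA mB ig.
rewrite -{1}(setUIDK A B) Rintegral_setU //.
- exact: measurableI.
- exact: measurableD.
- by rewrite setUIDK.
- apply/disj_set2P; rewrite setDE setIACA setICr setI0 //.
Qed.

Lemma Rint_null A (g : T -> R) : measurable A -> measurable_fun A g ->
  mu A = 0%E -> Rintegral mu A g = 0.
Proof.
move=> mA mg A0; rewrite /Rintegral null_set_integral //.
exact/measurable_EFinP.
Qed.

Lemma null_of_Rint0 A (g : T -> R) : measurable A -> measurable_fun A g ->
  mu.-integrable A (EFin \o g) ->
  (forall x, A x -> 0 < g x) -> Rintegral mu A g = 0 -> mu A = 0%E.
Proof.
move=> mA mg ig gpos R0.
have i0 : (\int[mu]_(x in A) (g x)%:E = 0)%E.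
  have fin := integrable_fin_num mA ig.
  by rewrite -(fineK fin); move: R0; rewrite /Rintegral => ->.
have : (\int[mu]_(x in A) `|(g x)%:E| = 0)%E.
  rewrite -i0; apply: eq_integral => x /set_mem Ax.
  by rewrite gee0_abs // lee_fin ltW // gpos.
have mEg : measurable_fun A (EFin \o g) by exact/measurable_EFinP.
move/(ae_eq_integral_abs mu mA mEg).
move=> [N [mN N0 sub]].
apply/eqP; rewrite eq_le measure_ge0 andbT -N0; apply: le_measure; rewrite ?inE //.
move=> x Ax; apply: sub => /= /(_ Ax) /eqP; apply/negP; rewrite /cst eqe.
by rewrite gt_eqF // gpos.
Qed.


Definition J m A := Rintegral mu A (f m).

Lemma lincombE a x : lincomb f a x = \sum_(m < M) a m * f m x.
Proof. by []. Qed.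

Lemma mlc a : measurable_fun setT (lincomb f a).
Proof.
rewrite /lincomb; apply: measurable_sum => m.
by apply: measurable_funM => //; exact: measurable_cst.
Qed.

Lemma lc_list a A (s : seq 'I_M) : measurable A ->
  mu.-integrable A (EFin \o (fun x => \sum_(m <- s) a m * f m x)) /\
  Rintegral mu A (fun x => \sum_(m <- s) a m * f m x) = \sum_(m <- s) a m * J m A.
Proof.
move=> mA; elim: s => [|m s [IHi IHe]].
  split.
    have -> : EFin \o (fun x => \sum_(m <- [::]) a m * f m x) = cst 0%E.
      by apply/funext => x; rewrite /= big_nil.
    exact: integrable0.
  rewrite big_nil; under eq_Rintegral do rewrite big_nil.
  by rewrite /Rintegral integral0.
have ie : EFin \o (fun x => \sum_(m0 <- m :: s) a m0 * f m0 x) =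
   ((fun x => (a m)%:E * (f m x)%:E)%E \+ (EFin \o (fun x => \sum_(m <- s) a m * f m x)%R))%E.
  by apply/funext => x; rewrite /= big_cons EFinD EFinM.
have im : mu.-integrable A (fun x => (a m)%:E * (f m x)%:E)%E.
  by apply: integrableZl => //; exact: intf.
split; first by rewrite ie; apply: integrableD.
under eq_Rintegral do rewrite big_cons.
have im' : mu.-integrable A (EFin \o (fun x => a m * f m x)).
  have -> : EFin \o (fun x => a m * f m x) = (fun x => (a m)%:E * (f m x)%:E)%E.
    by apply/funext => x; rewrite /= EFinM.
  exact: im.
rewrite RintegralD //.
rewrite RintegralZl //; last exact: intf.
by rewrite IHe big_cons.
Qed.

Lemma lc_int a A : measurable A ->
  mu.-integrable A (EFin \o lincomb f a) /\
  Rintegral mu A (lincomb f a) = \sum_(m < M) a m * J m A.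
Proof. move=> mA; exact: (lc_list a (index_enum 'I_M) mA). Qed.


Lemma mS a : measurable [set x | 0 < lincomb f a x].
Proof.
have := mlc a measurableT (measurable_itv `]0, +oo[).
rewrite setTI; congr measurable; apply/seteqP; split => x /=;
  by rewrite in_itv /= andbT.
Qed.

Lemma mZ a : measurable [set x | lincomb f a x = 0].
Proof.
have := mlc a measurableT (measurable_set1 (0:R)).
by rewrite setTI.
Qed.

Lemma J_ge0 m A : 0 <= J m A.
Proof. by apply: Rintegral_ge0 => x _; exact: f0. Qed.

Lemma Rint0 A (g : T -> R) : (forall x, A x -> g x = 0) -> measurable A ->
  Rintegral mu A g = 0.
Proof.
move=> H mA; rewrite (@eq_Rintegral _ _ _ _ _ (fun _ => 0)).
  by rewrite Rintegral_cst // mul0r.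
by move=> x /set_mem; exact: H.
Qed.

Lemma key_det a P : measurable P ->
  \sum_(m < M) a m * J m P <= \sum_(m < M) a m * J m [set x | 0 < lincomb f a x] /\
  ((forall m, Pm mu f m [set x | lincomb f a x = 0] = 0%E) ->
   \sum_(m < M) a m * J m P = \sum_(m < M) a m * J m [set x | 0 < lincomb f a x] ->
   forall m, J m P = J m [set x | 0 < lincomb f a x]).
Proof.
move=> mP.
set S := [set x | 0 < lincomb f a x].
set Z := [set x | lincomb f a x = 0].
have mS' : measurable S by exact: mS.
have mZ' : measurable Z by exact: mZ.
have mlcA : forall A, measurable_fun A (lincomb f a).
  by move=> A; apply: (measurable_funS measurableT) => //; exact: mlc.
have L A : measurable A -> \sum_(m < M) a m * J m A = Rintegral mu A (lincomb f a).
  by move=> mA; rewrite (lc_int a mA).2.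
have I A : measurable A -> mu.-integrable A (EFin \o lincomb f a).
  by move=> mA; exact: (lc_int a mA).1.
have mSP : measurable (S `&` P) by exact: measurableI.
have mSnP : measurable (S `\` P) by exact: measurableD.
have mPnS : measurable (P `\` S) by exact: measurableD.
have mPnSZ : measurable ((P `\` S) `&` Z) by exact: measurableI.
have mPnSnZ : measurable ((P `\` S) `\` Z) by exact: measurableD.
have eS : Rintegral mu S (lincomb f a) =
    Rintegral mu (S `&` P) (lincomb f a) + Rintegral mu (S `\` P) (lincomb f a).
  by apply: Rsplit => //; exact: I.
have eP : Rintegral mu P (lincomb f a) =
    Rintegral mu (S `&` P) (lincomb f a) + Rintegral mu (P `\` S) (lincomb f a).
  by rewrite setIC; apply: Rsplit => //; exact: I.
have eSnP : 0 <= Rintegral mu (S `\` P) (lincomb f a).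
  by apply: Rintegral_ge0 => x [Sx _]; exact: ltW.
have nPnS : forall A, measurable A -> A `<=` P `\` S ->
    0 <= - Rintegral mu A (lincomb f a).
  move=> A mA sA.
  rewrite -mulN1r -RintegralZl //; last exact: I.
  apply: Rintegral_ge0 => x /sA [_ nS]; rewrite mulN1r oppr_ge0.
  by rewrite leNgt; apply/negP.
have ePnS := nPnS _ mPnS (@subset_refl _ _).
split; first by rewrite !L //; lra.
move=> hZ; rewrite !L // => eq.
have SnP0 : Rintegral mu (S `\` P) (lincomb f a) = 0 by lra.
have PnS0 : Rintegral mu (P `\` S) (lincomb f a) = 0 by lra.
have muSnP : mu (S `\` P) = 0%E.
  apply: (null_of_Rint0 mSnP (mlcA _) (I _ mSnP)) => //.
  by move=> x [].
have ePnS2 : Rintegral mu (P `\` S) (lincomb f a) =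
    Rintegral mu ((P `\` S) `&` Z) (lincomb f a) + Rintegral mu ((P `\` S) `\` Z) (lincomb f a).
  by apply: Rsplit => //; exact: I.
have z1 : Rintegral mu ((P `\` S) `&` Z) (lincomb f a) = 0.
  by apply: Rint0 => // x [].
have muPnSnZ : mu ((P `\` S) `\` Z) = 0%E.
  have e0 : Rintegral mu ((P `\` S) `\` Z) (fun x => -1 * lincomb f a x) = 0.
    rewrite RintegralZl //; last exact: I.
    lra.
  apply: (null_of_Rint0 mPnSnZ _ _ _ e0).
  - by apply: measurable_funM => //.
  - have -> : EFin \o (fun x => -1 * lincomb f a x) = (fun x => (-1)%:E * (lincomb f a x)%:E)%E.
      by apply/funext => x; rewrite /= EFinM.
    by apply: integrableZl => //; exact: I.
  - move=> x [[_ nS] nZ]; rewrite mulN1r oppr_gt0.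
    rewrite lt_neqAle; apply/andP; split; first by apply/eqP.
    by rewrite leNgt; apply/negP.
move=> m.
have mfA : forall A, measurable_fun A (f m).
  by move=> A; apply: (measurable_funS measurableT) => //.
have JS : J m S = J m (S `&` P) + J m (S `\` P) by apply: Rsplit => //; exact: intf.
have JP : J m P = J m (S `&` P) + J m (P `\` S) by rewrite setIC; apply: Rsplit => //; exact: intf.
have JSnP : J m (S `\` P) = 0 by apply: Rint_null.
have JPnS : J m (P `\` S) = J m ((P `\` S) `&` Z) + J m ((P `\` S) `\` Z).
  by apply: Rsplit => //; exact: intf.
have JPnSnZ : J m ((P `\` S) `\` Z) = 0 by apply: Rint_null.
have JZ : J m Z = 0 by rewrite /J /Rintegral; have := hZ m; rewrite /Pm => ->.
have JZs : J m Z = J m (Z `&` (P `\` S)) + J m (Z `\` (P `\` S)).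
  by apply: Rsplit => //; exact: intf.
have := J_ge0 m (Z `&` (P `\` S)); have := J_ge0 m (Z `\` (P `\` S)).
have := J_ge0 m ((P `\` S) `&` Z).
rewrite setIC in JPnS.
lra.
Qed.


Lemma ord2 (i : 'I_2) : i = ord0 \/ i = ord_max.
Proof. by case: i => [[|[|//]]] Hi; [left|right]; apply/val_inj. Qed.

Lemma qdetE psi i m : qdet mu f psi i m = J m [set x | nat_of_bool (psi x) = val i].
Proof. by rewrite /qdet mxE. Qed.

Lemma qdet1 psi m : qdet mu f psi ord_max m = J m [set x | psi x].
Proof.
rewrite qdetE; congr J; apply/seteqP; split => x /=; by case: (psi x).
Qed.

Lemma qdet0 psi m : qdet mu f psi ord0 m = J m (~` [set x | psi x]).
Proof.
rewrite qdetE; congr J; apply/seteqP; split => x /=; by case: (psi x).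
Qed.

Lemma mdet psi : det_quantizer psi -> measurable [set x | psi x].
Proof. by rewrite /det_quantizer; congr measurable; apply/seteqP; split => x. Qed.

Lemma J_T m : J m setT = 1.
Proof. by rewrite /J /Rintegral f1. Qed.

Lemma qdet_rows psi m : det_quantizer psi ->
  qdet mu f psi ord0 m = 1 - qdet mu f psi ord_max m.
Proof.
move=> /mdet mP; rewrite qdet0 qdet1.
have := @Rsplit setT [set x | psi x] (f m) measurableT mP (intf m measurableT).
rewrite setTI setTD -/(J m _) -/(J m _) -/(J m _) J_T; lra.
Qed.

Lemma qdet_01 psi i m : det_quantizer psi -> 0 <= qdet mu f psi i m <= 1.
Proof.
move=> dp; have [->|->] := ord2 i.
  rewrite qdet_rows // qdet1 subr_ge0 lerBlDr lerDl J_ge0 andbT.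
  by have := qdet_rows m dp; rewrite qdet0 qdet1 => h; have := J_ge0 m (~` [set x | psi x]); lra.
rewrite qdet1 J_ge0 /=.
by have := qdet_rows m dp; rewrite qdet0 qdet1 => h; have := J_ge0 m (~` [set x | psi x]); lra.
Qed.

Lemma Qbar_cvg p phis i m : rand_quantizer p phis ->
  series (fun j => p j * qdet mu f (phis j) i m) @ \oo --> qrand mu f p phis i m.
Proof.
move=> [p0 [dphis p1]]; rewrite /qrand mxE.
apply: ser_cvg => // j; exact: qdet_01.
Qed.


Lemma Qbar_rows q m : Qbar mu f q -> q ord0 m = 1 - q ord_max m.
Proof.
move=> [p [phis [rq ->]]].
have h0 := Qbar_cvg (i:=ord0) (m:=m) rq.
have h1 := Qbar_cvg (i:=ord_max) (m:=m) rq.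
have [p0 [dphis p1]] := rq.
have e : series (fun j => p j * qdet mu f (phis j) ord0 m) =
   (fun n => 1 * series p n - series (fun j => p j * qdet mu f (phis j) ord_max m) n).
  apply/funext => n; rewrite !seriesEnat /= mul1r -sumrB; apply: eq_bigr => j _.
  by rewrite qdet_rows // mulrBr mulr1.
rewrite e in h0.
have h2 : (fun n => 1 * series p n - series (fun j => p j * qdet mu f (phis j) ord_max m) n)
   @ \oo --> 1 * 1 - qrand mu f p phis ord_max m.
  by apply: cvgB => //; exact: cvgMl_tmp.
rewrite mul1r in h2.
exact: (cvg_unique _ h0 h2).
Qed.

Lemma ser_one (c : R) :
  series (fun j => (j == 0)%:R * c) @ \oo --> c.
Proof.
apply: ser_shift => /=; rewrite mul1r.
have -> : (fun n => c + series (fun j => (j.+1 == 0)%:R * c) n) = (fun _ => c).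
  apply/funext => n; rewrite seriesEnat /= big1 ?addr0 // => j _; by rewrite mul0r.
exact: cvg_cst.
Qed.

Lemma qdet_Qbar psi : det_quantizer psi -> Qbar mu f (qdet mu f psi).
Proof.
move=> dp; exists (fun j => (j == 0)%:R : R), (fun _ => psi).
have rq : rand_quantizer (fun j : nat => (j == 0)%:R : R) (fun=> psi).
  split; first by move=> j; case: (j == 0).
  split => //.
  apply: ser_shift => /=; apply: cvg_near_cst; apply: nearW => n.
  by rewrite seriesEnat /= big1 ?addr0.
split => //; apply/matrixP => i m.
have h := Qbar_cvg (i:=i) (m:=m) rq.
exact: (cvg_unique _ (ser_one (c:=qdet mu f psi i m)) h).
Qed.

Lemma Qbar_mix q psi t : Qbar mu f q -> det_quantizer psi -> 0 <= t < 1 ->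
  exists z, Qbar mu f z /\ forall i m, z i m = t * qdet mu f psi i m + (1 - t) * q i m.
Proof.
move=> [p [phis [rq ->]]] dpsi /andP[t0 t1].
pose p' j := if j is j'.+1 then (1 - t) * p j' else t.
pose phis' j := if j is j'.+1 then phis j' else psi.
have rq' : rand_quantizer p' phis'.
  have [p0 [dphis p1]] := rq.
  split; first by case => [|j] //=; apply: mulr_ge0 => //; lra.
  split; first by case.
  apply: ser_shift => /=.
  have -> : (fun n => t + series (fun j => (1 - t) * p j) n) = (fun n => t + (1 - t) * series p n).
    by apply/funext => n; rewrite !seriesEnat /= mulr_sumr.
  have h := cvgD (cvg_cst t) (cvgMl_tmp (a:=1 - t) p1).
  have e : t + (1 - t) * 1 = 1 by ring.
  rewrite e in h; exact: h.
exists (qrand mu f p' phis'); split; first by exists p', phis'.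
move=> i m.
have h := Qbar_cvg (i:=i) (m:=m) rq'.
have h2 : series (fun j => p' j * qdet mu f (phis' j) i m) @ \oo -->
    t * qdet mu f psi i m + (1 - t) * qrand mu f p phis i m.
  apply: ser_shift => /=.
  have -> : (fun n => t * qdet mu f psi i m + series (fun j => (1 - t) * p j * qdet mu f (phis j) i m) n)
     = (fun n => t * qdet mu f psi i m + (1 - t) * series (fun j => p j * qdet mu f (phis j) i m) n).
    by apply/funext => n; rewrite !seriesEnat /= mulr_sumr; congr (_ + _); apply: eq_bigr => j _; rewrite mulrA.
  apply: cvgD; first exact: cvg_cst.
  apply: cvgMl_tmp; exact: Qbar_cvg.
exact: (cvg_unique _ h h2).
Qed.


Definition dot (a : 'I_M -> R) q := \sum_(m < M) a m * q ord_max m.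
Definition psiA (a : 'I_M -> R) : T -> bool := fun x => 0 < lincomb f a x.

Lemma psiA_det a : det_quantizer (psiA a).
Proof.
rewrite /det_quantizer; have := mS a; congr measurable.

Qed.

Lemma qdetA1 a m : qdet mu f (psiA a) ord_max m = J m [set x | 0 < lincomb f a x].
Proof. by rewrite qdet1. Qed.

Lemma keyQ a q : Qbar mu f q ->
  dot a q <= dot a (qdet mu f (psiA a)) /\
  ((forall m, Pm mu f m [set x | lincomb f a x = 0] = 0%E) ->
   dot a q = dot a (qdet mu f (psiA a)) -> q = qdet mu f (psiA a)).
Proof.
move=> [p [phis [rq ->]]]; have [p0 [dphis p1]] := rq.
set Es := dot a (qdet mu f (psiA a)).
pose E j := \sum_(m < M) a m * qdet mu f (phis j) ord_max m.
have hE : forall j, E j <= Es /\ ((forall m, Pm mu f m [set x | lincomb f a x = 0] = 0%E) ->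
    E j = Es -> forall m, qdet mu f (phis j) ord_max m = qdet mu f (psiA a) ord_max m).
  move=> j; have [h1 h2] := key_det a (mdet (dphis j)).
  have eE : E j = \sum_(m < M) a m * J m [set x | phis j x].
    by apply: eq_bigr => m _; rewrite qdet1.
  have eEs : Es = \sum_(m < M) a m * J m [set x | 0 < lincomb f a x].
    by apply: eq_bigr => m _; rewrite qdetA1.
  rewrite eE eEs; split => // hZ eq m; rewrite qdet1 qdetA1; exact: h2.
pose v j := p j * (Es - E j).
have v0 : forall j, 0 <= v j.
  by move=> j; apply: mulr_ge0 => //; have := (hE j).1; lra.
have ev : series v = (fun n => Es * series p n -
    \sum_(m <- index_enum 'I_M) a m * series (fun j => p j * qdet mu f (phis j) ord_max m) n).
  apply/funext => n; rewrite !seriesEnat /=.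
  under eq_bigr do rewrite /v mulrBr.
  rewrite sumrB; congr (_ - _).
    by rewrite [RHS]mulr_sumr; apply: eq_bigr => j _; rewrite mulrC.
  rewrite /E; under eq_bigr do rewrite mulr_sumr.
  rewrite exchange_big /=; apply: eq_bigr => m _; rewrite mulr_sumr.
  by apply: eq_bigr => j _; rewrite mulrCA.
have cv : series v @ \oo --> Es * 1 - dot a (qrand mu f p phis).
  rewrite ev; apply: cvgB; first exact: cvgMl_tmp.
  have hl := @cvg_lin R 'I_M (index_enum 'I_M) a
    (fun m n => series (fun j => p j * qdet mu f (phis j) ord_max m) n)
    (fun m => qrand mu f p phis ord_max m) (fun m => Qbar_cvg rq).
  exact: hl.
rewrite mulr1 in cv.
split; first by have := ser_ge0 v0 cv; lra.
move=> hZ eqd; rewrite eqd subrr in cv.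
have vz := ser_terms0 v0 cv.
have hj : forall j i m, p j * qdet mu f (phis j) i m = p j * qdet mu f (psiA a) i m.
  move=> j i m; have := vz j; rewrite /v => /eqP; rewrite mulf_eq0 => /orP[/eqP ->|]; first by rewrite !mul0r.
  rewrite subr_eq0 => /eqP Ej.
  have e1 := (hE j).2 hZ (esym Ej).
  have [->|->] := ord2 i; last by rewrite e1.
  by rewrite !qdet_rows ?e1 //; exact: psiA_det.
apply/matrixP => i m.
have h := Qbar_cvg (i:=i) (m:=m) rq.
have e : series (fun j => p j * qdet mu f (phis j) i m) = (fun n => series p n * qdet mu f (psiA a) i m).
  apply/funext => n; rewrite !seriesEnat /= mulr_suml; apply: eq_bigr => j _; exact: hj.
rewrite e in h.
have h2 : (fun n => series p n * qdet mu f (psiA a) i m) @ \oo --> qdet mu f (psiA a) i m.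
  have := cvgMr_tmp (b := qdet mu f (psiA a) i m) p1; rewrite mul1r; exact.
exact: (cvg_unique _ h h2).
Qed.


Lemma QU_ext q : QU mu f q -> extreme_points (Qbar mu f) q.
Proof.
move=> [phi [dphi [a [hphi hZ]]] <-].
have -> : phi = psiA a by apply/funext => x; rewrite hphi.
split; first exact/qdet_Qbar/psiA_det.
move=> y z t Qy Qz /andP[t0 t1] eq.
have [ly ey] := keyQ a Qy.
have [lz ez] := keyQ a Qz.
set D := dot a (qdet mu f (psiA a)) in ly lz ey ez *.
have eD : D = t * dot a y + (1 - t) * dot a z.
  rewrite /D /dot eq !mulr_sumr -big_split /=; apply: eq_bigr => m _.
  rewrite !mxE; ring.
have h1 : 0 <= t * (D - dot a y) by apply: mulr_ge0; lra.
have h2 : 0 <= (1 - t) * (D - dot a z) by apply: mulr_ge0; lra.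
have h3 : t * (D - dot a y) + (1 - t) * (D - dot a z) = 0 by rewrite eD; ring.
have e1 : t * (D - dot a y) = 0 by lra.
have e2 : (1 - t) * (D - dot a z) = 0 by lra.
have dy : D - dot a y = 0.
  by move/eqP: e1; rewrite mulf_eq0 => /orP[/eqP ht0|/eqP //]; exfalso; lra.
have dz : D - dot a z = 0.
  by move/eqP: e2; rewrite mulf_eq0 => /orP[/eqP ht0|/eqP //]; exfalso; lra.
split.
  by rewrite (ey hZ) //; lra.
by rewrite (ez hZ) //; lra.
Qed.

Fixpoint allP (l : seq (R * (T -> bool))) : Prop :=
  match l with [::] => True | x :: l' => (0 <= x.1 /\ det_quantizer x.2) /\ allP l' end.

Lemma allP_cat l1 l2 : allP l1 -> allP l2 -> allP (l1 ++ l2).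
Proof. by elim: l1 => [|x l1 IH] //= [hx h1] h2; split => //; exact: IH. Qed.

Lemma allP_map l (c : R) : 0 <= c -> allP l -> allP (map (fun x => (c * x.1, x.2)) l).
Proof.
move=> c0; elim: l => [|x l IH] //= [[hx dx] hl]; split; last exact: IH.
by split => //; apply: mulr_ge0.
Qed.

Definition W q (l : seq (R * (T -> bool))) (m : 'I_M) :=
  \sum_(x <- l) x.1 * (qdet mu f x.2 ord_max m - q ord_max m).

Lemma sum_ge0 (l : seq (R * (T -> bool))) : allP l -> 0 <= \sum_(x <- l) x.1.
Proof.
elim: l => [|x l IH] /=; first by rewrite big_nil.
by move=> [[hx _] hl]; rewrite big_cons addr_ge0 // IH.
Qed.

Lemma mixlist q l : Qbar mu f q -> allP l -> forall lam, 0 <= lam ->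
  lam * \sum_(x <- l) x.1 < 1 ->
  exists y, Qbar mu f y /\ forall m, y ord_max m = q ord_max m + lam * W q l m.
Proof.
move=> Qq; elim: l => [|x l IH] /= hl lam lam0 hlt.
  by exists q; split => // m; rewrite /W big_nil mulr0 addr0.
move: hl => [[x0 dx] hl].
rewrite big_cons in hlt.
have hS := sum_ge0 hl.
set S := \sum_(x <- l) x.1 in hlt hS.
have al : lam * x.1 < 1.
  have : 0 <= lam * S by apply: mulr_ge0.
  have := hlt; rewrite mulrDr; lra.
have a0 : 0 <= lam * x.1 by apply: mulr_ge0.
set al1 := lam * x.1 in al a0.
have pos : 0 < 1 - al1 by lra.
have [y [Qy hy]] : exists y, Qbar mu f y /\ forall m, y ord_max m = q ord_max m + (lam / (1 - al1)) * W q l m.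
  apply: IH => //; first by apply: divr_ge0 => //; lra.
  rewrite mulrAC ltr_pdivrMr // mul1r.
  rewrite -/S.
  have := hlt; rewrite mulrDr /al1; lra.
have [z [Qz hz]] := Qbar_mix Qy dx (t:=al1) (ltac:(apply/andP; split => //)).
exists z; split => // m.
rewrite hz hy /W big_cons -/(W q l m).
rewrite /al1; field; rewrite /al1 in pos; lra.
Qed.

Lemma pointed q l1 l2 : extreme_points (Qbar mu f) q -> allP l1 -> allP l2 ->
  (forall m, W q l1 m = - W q l2 m) -> forall m, W q l1 m = 0.
Proof.
move=> [Qq ext] h1 h2 e m.
have s1 := sum_ge0 h1.
have s2 := sum_ge0 h2.
set S1 := \sum_(x <- l1) x.1 in s1.
set S2 := \sum_(x <- l2) x.1 in s2.
pose lam := (1 + S1 + S2)^-1.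
have lpos : 0 < lam by rewrite invr_gt0; lra.
have lS : forall S, 0 <= S -> S <= S1 + S2 -> lam * S < 1.
  move=> S S0 SS; rewrite /lam mulrC ltr_pdivrMr; lra.
have [y1 [Q1 hy1]] := mixlist Qq h1 (ltW lpos) (lS _ s1 (ltac:(lra))).
have [y2 [Q2 hy2]] := mixlist Qq h2 (ltW lpos) (lS _ s2 (ltac:(lra))).
have eq : q = (1/2 : R) *: y1 + (1 - 1/2) *: y2.
  apply/matrixP => i k; rewrite !mxE.
  have [->|->] := ord2 i.
    rewrite (Qbar_rows k Qq) (Qbar_rows k Q1) (Qbar_rows k Q2) hy1 hy2 e.
    lra.
  by rewrite hy1 hy2 e; lra.
have [y1q _] := ext y1 y2 (1/2) Q1 Q2 (ltac:(apply/andP; split; lra)) eq.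
have := hy1 m; rewrite y1q => h.
have : lam * W q l1 m = 0 by lra.
by move/eqP; rewrite mulf_eq0 gt_eqF //= => /eqP.
Qed.


Lemma ext_QU0 q : M = 0%N -> extreme_points (Qbar mu f) q -> QU mu f q.
Proof.
move=> M0 _; exists (psiA (fun _ => 0)).
  split; first exact: psiA_det.
  exists (fun _ => 0); split => // m; exfalso; have := ltn_ord m.
  by rewrite [X in (_ < X)%N -> _]M0.
apply/matrixP => i m; exfalso; have := ltn_ord m.
by rewrite [X in (_ < X)%N -> _]M0.
Qed.

Lemma ext_QU q : (0 < M)%N -> densities_lin_indep mu f ->
  extreme_points (Qbar mu f) q -> QU mu f q.
Proof.
move=> Mpos lin ext.
have Qq := ext.1.
pose m0 : 'I_M := Ordinal Mpos.
pose K := fun w : nat -> R => supp M w /\ exists l, allP l /\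
   forall i, (i < M)%N -> w i = W q l (insubd m0 i).
have cK : cone M K.
  split.
  - by move=> w [].
  - split; first by move=> i.
    by exists [::]; split => // i _; rewrite /W big_nil.
  - move=> x y [sx [l1 [h1 e1]]] [sy [l2 [h2 e2]]]; split; first exact: supp_add.
    exists (l1 ++ l2); split; first exact: allP_cat.
    by move=> i hi; rewrite /vadd e1 // e2 // /W big_cat.
  - move=> c x c0 [sx [l [h e]]]; split; first exact: supp_sc.
    exists (map (fun x => (c * x.1, x.2)) l); split; first exact: allP_map (ltW c0) h.
    move=> i hi; rewrite /vsc e // /W big_map mulr_sumr; apply: eq_bigr => u _.
    by rewrite /= mulrA.
have insK : forall m : 'I_M, insubd m0 (val m) = m by move=> m; exact: valKd.
have notK : exists y, supp M y /\ ~ K y.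
  have se : supp M (ev R 0) by move=> i hi; rewrite /ev; case: eqP => // e; subst; by rewrite leqNgt Mpos in hi.
  have [K1|nK1] := pselect (K (ev R 0)); last by exists (ev R 0).
  exists (vsc (-1) (ev R 0)); split; first exact: supp_sc.
  move=> [_ [l2 [h2 e2]]]; move: K1 => [_ [l1 [h1 e1]]].
  have W0 := pointed ext h1 h2.
  have : W q l1 m0 = 0.
    apply: W0 => m; have := e1 _ (ltn_ord m); have := e2 _ (ltn_ord m).
    rewrite !insK /vsc => <- <-; ring.
  have := e1 0%N Mpos; rewrite /ev eqxx.
  have -> : insubd m0 0%N = m0 by apply: val_inj; rewrite val_insubd Mpos.
  move=> <-; apply/eqP; exact: oner_neq0.
have [a [[i0 [hi0 ai0]] Ha]] := Sep cK notK.
pose a' : 'I_M -> R := fun m => a m.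
have nz : exists m, a' m != 0 by exists (Ordinal hi0).
have hZ := lin a' nz.
pose w := fun i : nat => if (i < M)%N then
   qdet mu f (psiA a') ord_max (insubd m0 i) - q ord_max (insubd m0 i) else 0.
have Kw : K w.
  split; first by move=> i hi; rewrite /w ltnNge hi.
  exists [:: (1, psiA a')]; split; first by split => //; split => //; exact: psiA_det.
  by move=> i hi; rewrite /w hi /W big_cons big_nil mul1r addr0.
have h := Ha w Kw.
have ed : dotn M a w = dot a' (qdet mu f (psiA a')) - dot a' q.
  rewrite /dotn /dot -sumrB; apply: eq_bigr => m _.
  by rewrite /w ltn_ord insK /a' mulrBr.
have [le eq] := keyQ a' Qq.
have e : q = qdet mu f (psiA a') by apply: eq => //; lra.
exists (psiA a') => //; split; first exact: psiA_det.
by exists a'.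
Qed.

End Meas.

Theorem lemmaA1 (d : measure_display) (T : measurableType d) (R : realType)
  (mu : {measure set T -> \bar R}) (M : nat) (f : 'I_M -> T -> R) :
  sigma_finite setT mu ->
  (forall m, measurable_fun setT (f m)) ->
  (forall m x, 0 <= f m x) ->
  (forall m, (\int[mu]_x (f m x)%:E)%E = 1%E) ->
  densities_lin_indep mu f ->
  extreme_points (Qbar mu f) = QU mu f.
Proof.
move=> _ mf f0 f1 lin; apply/seteqP; split => q.
  case: (posnP M) => [M0|Mpos] hq.
    by apply: ext_QU0.
  by apply: ext_QU.
by move=> hq; apply: QU_ext.
Qed.
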